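(* Consider the network Polya contagion process on the complete graph on $N$ nodes with $\Delta_{r,i}(t)=\Delta_{b,i}(t)=\Delta>0$ for all nodes $i$ and times $t$. Let $\bar T=\sum_{k=1}^N T_k$, $\rho=\frac{\sum_{k=1}^N R_k}{\bar T}$ and $\delta=\frac{N\Delta}{\bar T}$. Then for every node $i$ and every $n\ge 2$, \[ P(Z_{i,n}=1,Z_{i,1}=1)=\rho\,\frac{\rho+(1+(N-1)\rho)\frac{\delta}{N}}{1+\delta}, \] and moreover, for any other node $k$ (and $n\ge 2$), \[ P(Z_{k,n}=1,Z_{i,1}=1)=\rho\,\frac{\rho+(1+(N-1)\rho)\frac{\delta}{N}}{1+\delta}. \]
   Context: Network Polya contagion process: $\mathcal{G}=(V,\mathcal{E})$ is a connected undirected graph, $V=\{1,\dots,N\}$, $\mathcal{N}_i'=\{i\}\cup\{v:(i,v)\in\mathcal{E}\}$; the complete graph has $\mathcal{N}_i'=V$ for all $i$. Each node $i$ has an urn initially containing $R_i\in\mathbb{Z}_{>0}$ red and $B_i\in\mathbb{Z}_{>0}$ black balls, $T_i=R_i+B_i$. The super urn of node $i$ is the union of the urns of nodes in $\mathcal{N}_i'$. At each time $t=1,2,\dots$ every node $i$ simultaneously draws from its super urn; $Z_{i,t}=1$ if red, $0$ if black; then $\Delta_{r,i}(t)$ red balls (if red drawn) or $\Delta_{b,i}(t)$ black balls (if black drawn) are added to node $i$'s own urn. Given the whole history, the time-$n$ draws are conditionally independent with $P(Z_{i,n}=1\mid\{Z_j^{n-1}\}_{j=1}^N)=\dfrac{\sum_{j\in\mathcal{N}_i'}\big(R_j+\sum_{t=1}^{n-1}Z_{j,t}\Delta_{r,j}(t)\big)}{\sum_{j\in\mathcal{N}_i'}\big(T_j+\sum_{t=1}^{n-1}(Z_{j,t}\Delta_{r,j}(t)+(1-Z_{j,t})\Delta_{b,j}(t))\big)}$.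 *)

(* Defs.v *)
From HB Require Import structures.
From mathcomp Require Import all_boot all_order all_algebra.
Set Implicit Arguments. Unset Strict Implicit. Unset Printing Implicit Defensive.
Import Order.TTheory GRing.Theory Num.Theory.
Local Open Scope ring_scope.

(* A history of the first n draw rounds of N nodes: z s j = (Z_{j,s+1} = 1),
   i.e. rounds are indexed 0-based by s : 'I_n (s stands for time s+1). *)
Definition history (N n : nat) := {ffun 'I_n -> {ffun 'I_N -> bool}}.

(* Z_{i,t} for 1-based time t (false if t is out of range 1..n). *)
Definition Zv (N n : nat) (z : history N n) (t : nat) (i : 'I_N) : bool :=
  match (insub t.-1 : option 'I_n) with Some s => z s i | None => false end.

Definition in_closed_nbhd (N : nat) (nb : 'I_N -> 'I_N -> bool) (i j : 'I_N) : bool :=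
  (j == i) || nb i j.

Definition complete_nb (N : nat) : 'I_N -> 'I_N -> bool := fun _ _ => true.

(* Red balls in urn j before the draw at (1-based) time t+1, i.e. after the
   draws of rounds 1..t. Dr j s / Db j s = Delta_{r,j}(s), Delta_{b,j}(s). *)
Definition red_count (N n : nat) (Rb : 'I_N -> nat) (Dr : 'I_N -> nat -> nat)
    (z : history N n) (t : nat) (j : 'I_N) : nat :=
  (Rb j + \sum_(s < n | (s < t)%N) (if z s j then Dr j s.+1 else 0))%N.

Definition total_count (N n : nat) (Rb Bb : 'I_N -> nat) (Dr Db : 'I_N -> nat -> nat)
    (z : history N n) (t : nat) (j : 'I_N) : nat :=
  (Rb j + Bb j + \sum_(s < n | (s < t)%N)
      (if z s j then Dr j s.+1 else Db j s.+1))%N.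

(* P(Z_{i,t+1} = 1 | history of rounds 1..t). *)
Definition draw_prob (R : realFieldType) (N n : nat) (nb : 'I_N -> 'I_N -> bool)
    (Rb Bb : 'I_N -> nat) (Dr Db : 'I_N -> nat -> nat)
    (z : history N n) (t : nat) (i : 'I_N) : R :=
  (\sum_(j | in_closed_nbhd nb i j) red_count Rb Dr z t j)%N%:R
  / (\sum_(j | in_closed_nbhd nb i j) total_count Rb Bb Dr Db z t j)%N%:R.

(* Probability of a full history of n rounds: product of the conditional
   (independent given the past) Bernoulli draw probabilities. *)
Definition path_prob (R : realFieldType) (N n : nat) (nb : 'I_N -> 'I_N -> bool)
    (Rb Bb : 'I_N -> nat) (Dr Db : 'I_N -> nat -> nat) (z : history N n) : R :=
  \prod_(t < n) \prod_(i < N)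
     (let p := draw_prob R nb Rb Bb Dr Db z t i in if z t i then p else 1 - p).

Definition npp_prob (R : realFieldType) (N n : nat) (nb : 'I_N -> 'I_N -> bool)
    (Rb Bb : 'I_N -> nat) (Dr Db : 'I_N -> nat -> nat)
    (E : history N n -> bool) : R :=
  \sum_(z : history N n | E z) path_prob R nb Rb Bb Dr Db z.

(* Main.v *)
Require Import Defs.
From HB Require Import structures.
From mathcomp Require Import all_boot all_order all_algebra.
From mathcomp Require Import ring lra zify.
Set Implicit Arguments. Unset Strict Implicit. Unset Printing Implicit Defensive.
Import Order.TTheory GRing.Theory Num.Theory.
Local Open Scope ring_scope.

Definition extend (X : Type) (m : nat) (w : {ffun 'I_m -> X}) (x : X) : {ffun 'I_m.+1 -> X} :=
  [ffun s => if unlift ord_max s is Some s' then w s' else x].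

Lemma extend_lift (X : Type) m (w : {ffun 'I_m -> X}) x s :
  extend w x (lift ord_max s) = w s.
Proof. by rewrite /extend ffunE liftK. Qed.

Lemma extend_max (X : Type) m (w : {ffun 'I_m -> X}) x :
  extend w x ord_max = x.
Proof. by rewrite /extend ffunE unlift_none. Qed.

Lemma extend_widen (X : Type) m (w : {ffun 'I_m -> X}) x s :
  extend w x (widen_ord (leqnSn m) s) = w s.
Proof.
have -> : widen_ord (leqnSn m) s = lift ord_max s by by apply: val_inj => /=; rewrite /bump leqNgt ltn_ord.
exact: extend_lift.
Qed.

Lemma sum_extend (R : nmodType) (X : finType) m (F : {ffun 'I_m.+1 -> X} -> R) :
  \sum_(z : {ffun 'I_m.+1 -> X}) F z =
  \sum_(w : {ffun 'I_m -> X}) \sum_(x : X) F (extend w x).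
Proof.
rewrite pair_big /=.
rewrite (reindex (fun p : {ffun 'I_m -> X} * X => extend p.1 p.2)) //=.
exists (fun z : {ffun 'I_m.+1 -> X} => ([ffun s => z (lift ord_max s)], z ord_max)).
  move=> [w x] _ /=; congr (_, _); last by rewrite extend_max.
  by apply/ffunP => s; rewrite ffunE extend_lift.
move=> z _ /=; apply/ffunP => s; rewrite /extend ffunE.
by case: unliftP => [j ->|->] //; rewrite ffunE.
Qed.

Definition Bern (R : nzRingType) (b : bool) (p : R) := if b then p else 1 - p.

Lemma bern_sum (R : comNzRingType) N (p : R) (h : 'I_N -> bool -> R) :
  \sum_(x : {ffun 'I_N -> bool}) \prod_i (Bern (x i) p * h i (x i)) =
  \prod_i (p * h i true + (1 - p) * h i false).
Proof.
have := @bigA_distr_bigA R 0 1 *%R +%R 'I_N bool (fun i b => Bern b p * h i b).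
move=> /= <-; by apply: eq_bigr => i _; rewrite big_bool.
Qed.

Lemma bern1 (R : comNzRingType) N (p : R) :
  \sum_(x : {ffun 'I_N -> bool}) \prod_i Bern (x i) p = 1.
Proof.
transitivity (\sum_(x : {ffun 'I_N -> bool}) \prod_i (Bern (x i) p * (fun _ _ => 1) i (x i))).
  by apply: eq_bigr => x _; apply: eq_bigr => i _; rewrite mulr1.
by rewrite (bern_sum p (fun _ _ => 1)) big1 // => i _; ring.
Qed.

Lemma bern_x (R : comNzRingType) N (p : R) k :
  \sum_(x : {ffun 'I_N -> bool}) \prod_i Bern (x i) p * (x k)%:R = p.
Proof.
transitivity (\sum_(x : {ffun 'I_N -> bool}) \prod_i (Bern (x i) p *
   (fun i b => if i == k then b%:R else 1) i (x i))).
  apply: eq_bigr => x _; rewrite big_split /=; congr (_ * _).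
  by rewrite -big_mkcond /= big_pred1_eq.
rewrite (bern_sum p (fun i b => if i == k then b%:R else 1)) (bigD1 k) //= eqxx big1 ?mulr1; first ring.
by move=> i /negbTE ->; ring.
Qed.

Lemma bern_xx (R : comNzRingType) N (p : R) k j : j != k ->
  \sum_(x : {ffun 'I_N -> bool}) \prod_i Bern (x i) p * ((x k)%:R * (x j)%:R) = p * p.
Proof.
move=> jk.
transitivity (\sum_(x : {ffun 'I_N -> bool}) \prod_i (Bern (x i) p *
   (fun i b => if i == k then b%:R else if i == j then b%:R else 1) i (x i))).
  apply: eq_bigr => x _; rewrite big_split /=; congr (_ * _).
  rewrite (bigD1 k) //= eqxx (bigD1 j) //= (negbTE jk) eqxx big1 ?mulr1 //.
  by move=> i /andP [ij ik]; rewrite (negbTE ij) (negbTE ik).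
rewrite (bern_sum p (fun i b => if i == k then b%:R else if i == j then b%:R else 1)) (bigD1 k) //= eqxx (bigD1 j) //= (negbTE jk) eqxx big1 ?mulr1; first ring.
by move=> i /andP [ij ik]; rewrite (negbTE ij) (negbTE ik); ring.
Qed.
Definition cnt N m (z : history N m) (t : nat) : nat :=
  (\sum_(s < m | (s < t)%N) \sum_(j < N) (z s j : nat))%N.

Definition qq (R : realFieldType) N (Rb Bb : 'I_N -> nat) (D c t : nat) : R :=
  (\sum_(k < N) Rb k + D * c)%N%:R / (\sum_(k < N) (Rb k + Bb k) + t * (N * D))%N%:R.

Lemma draw_eq (R : realFieldType) N m (Rb Bb : 'I_N -> nat) (D : nat) (z : history N m) (t : nat) (i : 'I_N) : (t <= m)%N ->
  draw_prob R (@complete_nb N) Rb Bb (fun _ _ => D) (fun _ _ => D) z t i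
  = qq R Rb Bb D (cnt z t) t.
Proof.
move=> tm; rewrite /draw_prob /qq; congr (_%:R / _%:R).
  rewrite (eq_bigl predT); last by move=> j; rewrite /in_closed_nbhd /complete_nb orbT.
  rewrite /red_count big_split /=; congr (_ + _)%N.
  rewrite exchange_big /= /cnt big_distrr /=; apply: eq_bigr => s _.
  rewrite big_distrr /=; apply: eq_bigr => j _.
  by case: (z s j); rewrite ?muln1 ?muln0.
rewrite (eq_bigl predT); last by move=> j; rewrite /in_closed_nbhd /complete_nb orbT.
rewrite /total_count big_split /=; congr (_ + _)%N.
under eq_bigr do (under eq_bigr do rewrite if_same; rewrite -(big_ord_widen _ (fun _ => D) tm)).
idtac.
under eq_bigr do rewrite big_const_ord iter_addn_0.
idtac.
rewrite sum_nat_const card_ord; lia.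
Qed.

Definition Wt (R : realFieldType) N (Rb Bb : 'I_N -> nat) (D : nat) m (z : history N m) : R :=
  \prod_(t < m) \prod_(i < N) Bern (z t i) (qq R Rb Bb D (cnt z t) t).

Lemma path_prob_eq (R : realFieldType) N (Rb Bb : 'I_N -> nat) (D : nat) m (z : history N m) :
  path_prob R (@complete_nb N) Rb Bb (fun _ _ => D) (fun _ _ => D) z = Wt R Rb Bb D z.
Proof.
rewrite /path_prob /Wt; apply: eq_bigr => t _; apply: eq_bigr => i _ /=.
by rewrite draw_eq // ltnW.
Qed.

Lemma cnt_extend_le N m (w : history N m) x t : (t <= m)%N ->
  cnt (extend w x : history N m.+1) t = cnt w t.
Proof.
move=> tm; rewrite /cnt big_mkcond big_ord_recr /= ltnNge tm /= addn0.
rewrite [RHS]big_mkcond; apply: eq_bigr => s _ /=.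
by rewrite extend_widen.
Qed.

Lemma cnt_extend_S N m (w : history N m) x :
  cnt (extend w x : history N m.+1) m.+1 = (cnt w m + \sum_(j < N) x j)%N.
Proof.
rewrite /cnt big_mkcond big_ord_recr /= ltnSn extend_max; congr (_ + _)%N.
rewrite [RHS]big_mkcond; apply: eq_bigr => s _ /=.
by rewrite extend_widen ltn_ord ltnS (ltnW (ltn_ord s)).
Qed.

Lemma Wt_extend (R : realFieldType) N (Rb Bb : 'I_N -> nat) (D : nat) m (w : history N m) x :
  Wt R Rb Bb D (extend w x : history N m.+1) =
  Wt R Rb Bb D w * \prod_i Bern (x i) (qq R Rb Bb D (cnt w m) m).
Proof.
rewrite /Wt big_ord_recr /=; congr (_ * _).
  apply: eq_bigr => t _; rewrite cnt_extend_le ?(ltnW (ltn_ord t)) //.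
  by apply: eq_bigr => i _; rewrite extend_widen.
by rewrite cnt_extend_le // extend_max.
Qed.

Lemma bern_cnt (R : comNzRingType) N (p : R) :
  \sum_(x : {ffun 'I_N -> bool}) \prod_i Bern (x i) p * (\sum_(j < N) x j)%N%:R = N%:R * p.
Proof.
under eq_bigr do rewrite natr_sum mulr_sumr.
rewrite exchange_big /=.
under eq_bigr do rewrite bern_x.
by rewrite sumr_const card_ord mulr_natl.
Qed.

Lemma bern_x_cnt (R : comNzRingType) N (p : R) (i : 'I_N) :
  \sum_(x : {ffun 'I_N -> bool}) \prod_i Bern (x i) p * ((x i)%:R * (\sum_(j < N) x j)%N%:R)
  = p + (N.-1)%:R * (p * p).
Proof.
under eq_bigr do rewrite natr_sum mulr_sumr mulr_sumr.
rewrite exchange_big /= (bigD1 i) //=; congr (_ + _).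
  rewrite -[RHS](bern_x p i); apply: eq_bigr => x _.
  by case: (x i); rewrite ?mulr1 ?mulr0.
rewrite (eq_bigr (fun _ => p * p)); last by move=> j ji; rewrite bern_xx.
by rewrite sumr_const cardC1 card_ord mulr_natl.
Qed.

Lemma qstep (R : realFieldType) N (Rb Bb : 'I_N -> nat) (D : nat) c t :
  (0 < \sum_(k < N) (Rb k + Bb k))%N ->
  \sum_(x : {ffun 'I_N -> bool}) \prod_i Bern (x i) (qq R Rb Bb D c t)
      * qq R Rb Bb D (c + \sum_(j < N) x j) t.+1
  = qq R Rb Bb D c t.
Proof.
move=> T0.
set A := (\sum_(k < N) Rb k + D * c)%N.
set B := (\sum_(k < N) (Rb k + Bb k) + t * (N * D))%N.
have B0 : (B%:R : R) != 0 by rewrite pnatr_eq0 -lt0n /B ltn_addr.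
have B'0 : ((B + N * D)%N%:R : R) != 0 by rewrite pnatr_eq0 -lt0n /B -addnA ltn_addr.
have EB : (\sum_(k < N) (Rb k + Bb k) + t.+1 * (N * D))%N = (B + N * D)%N by rewrite /B mulSn; lia.
have Eq : qq R Rb Bb D c t = A%:R / B%:R by [].
rewrite Eq.
transitivity (\sum_(x : {ffun 'I_N -> bool})
   (A%:R / (B + N * D)%N%:R * \prod_i Bern (x i) (A%:R / B%:R : R)
    + D%:R / (B + N * D)%N%:R * (\prod_i Bern (x i) (A%:R / B%:R) * (\sum_(j < N) x j)%N%:R))).
  apply: eq_bigr => x _; rewrite /qq EB mulnDr addnA -/A natrD natrM.
  ring.
rewrite big_split /= -!mulr_sumr bern1 bern_cnt.
rewrite natrD natrM; field.
by rewrite B0 -natrM -natrD.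
Qed.

Lemma extend_ord0 (X : Type) m (w : {ffun 'I_m.+1 -> X}) x :
  extend w x (ord0 : 'I_m.+2) = w ord0.
Proof.
have -> : (ord0 : 'I_m.+2) = lift ord_max ord0 by apply: val_inj.
exact: extend_lift.
Qed.

Lemma extend_ord0_1 (X : Type) (w : {ffun 'I_0 -> X}) x :
  extend w x (ord0 : 'I_1) = x.
Proof.
have -> : (ord0 : 'I_1) = ord_max by apply: val_inj.
exact: extend_max.
Qed.

Definition Sm (R : realFieldType) N (Rb Bb : 'I_N -> nat) (D : nat) (i : 'I_N) m : R :=
  \sum_(w : history N m.+1) Wt R Rb Bb D w * (w ord0 i)%:R * qq R Rb Bb D (cnt w m.+1) m.+1.

Lemma Sm_step (R : realFieldType) N (Rb Bb : 'I_N -> nat) (D : nat) i m :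
  (0 < \sum_(k < N) (Rb k + Bb k))%N ->
  Sm R Rb Bb D i m.+1 = Sm R Rb Bb D i m.
Proof.
move=> T0; rewrite /Sm sum_extend; apply: eq_bigr => w _.
transitivity (Wt R Rb Bb D w * (w ord0 i)%:R *
  \sum_(x : {ffun 'I_N -> bool}) \prod_i Bern (x i) (qq R Rb Bb D (cnt w m.+1) m.+1)
      * qq R Rb Bb D (cnt w m.+1 + \sum_(j < N) x j) m.+2).
  rewrite mulr_sumr; apply: eq_bigr => x _.
  by rewrite Wt_extend extend_ord0 cnt_extend_S; ring.
by rewrite qstep.
Qed.

Lemma Sm_0 (R : realFieldType) N (Rb Bb : 'I_N -> nat) (D : nat) i :
  (0 < \sum_(k < N) (Rb k + Bb k))%N ->
  let Tbar : R := (\sum_(k < N) (Rb k + Bb k))%N%:R in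
  let rho : R := (\sum_(k < N) Rb k)%N%:R / Tbar in
  let delta : R := (N * D)%N%:R / Tbar in
  Sm R Rb Bb D i 0 = rho * (rho + (1 + (N%:R - 1) * rho) * (delta / N%:R)) / (1 + delta).
Proof.
move=> T0 Tbar rho delta.
rewrite /Sm sum_extend.
set r := qq R Rb Bb D 0 0.
have Ew : forall w : {ffun 'I_0 -> {ffun 'I_N -> bool}},
  \sum_x Wt R Rb Bb D (extend w x : history N 1) * (extend w x ord0 i)%:R
     * qq R Rb Bb D (cnt (extend w x : history N 1) 1) 1
  = \sum_(x : {ffun 'I_N -> bool}) \prod_j Bern (x j) r * (x i)%:R
     * qq R Rb Bb D (\sum_(j < N) x j) 1.
  move=> w; apply: eq_bigr => x _.
  rewrite Wt_extend extend_ord0_1 cnt_extend_S.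
  have -> : cnt w 0 = 0%N by rewrite /cnt big_ord0.
  by rewrite /Wt big_ord0 mul1r.
rewrite (eq_bigr _ (fun w _ => Ew w)) sumr_const card_ffun !card_ord expn0 mulr1n.
set Rt := (\sum_(k < N) Rb k)%N.
set Tt := (\sum_(k < N) (Rb k + Bb k))%N.
have Er : r = Rt%:R / Tt%:R by rewrite /r /qq muln0 mul0n !addn0.
transitivity (\sum_(x : {ffun 'I_N -> bool})
   (Rt%:R / (Tt + N * D)%N%:R * (\prod_j Bern (x j) r * (x i)%:R)
    + D%:R / (Tt + N * D)%N%:R * (\prod_j Bern (x j) r * ((x i)%:R * (\sum_(j < N) x j)%N%:R)))).
  apply: eq_bigr => x _; rewrite /qq mul1n -/Rt -/Tt natrD natrM.
  ring.
rewrite big_split /= -!mulr_sumr bern_x bern_x_cnt Er.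
have N0 : (0 < N)%N := leq_ltn_trans (leq0n _) (ltn_ord i).
have EN : (N.-1%:R : R) = N%:R - 1 by rewrite -subn1 natrB.
have T0' : (Tt%:R : R) != 0 by rewrite pnatr_eq0 -lt0n.
have TN0 : ((Tt + N * D)%N%:R : R) != 0 by rewrite pnatr_eq0 -lt0n ltn_addr.
have N0' : (N%:R : R) != 0 by rewrite pnatr_eq0 -lt0n.
rewrite /rho /delta /Tbar -/Rt -/Tt EN.
move: TN0; rewrite !natrD !natrM => TN0.
by field; rewrite T0' TN0 N0'.
Qed.

Lemma Sm_all (R : realFieldType) N (Rb Bb : 'I_N -> nat) (D : nat) i m :
  (0 < \sum_(k < N) (Rb k + Bb k))%N ->
  Sm R Rb Bb D i m = Sm R Rb Bb D i 0.
Proof. by move=> T0; elim: m => // m IH; rewrite Sm_step. Qed.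

Lemma peel (R : realFieldType) N (Rb Bb : 'I_N -> nat) (D : nat) (i k : 'I_N) m :
  \sum_(z : history N m.+2) Wt R Rb Bb D z * (z ord_max k && z ord0 i)%:R
  = Sm R Rb Bb D i m.
Proof.
rewrite /Sm sum_extend; apply: eq_bigr => w _.
transitivity (Wt R Rb Bb D w * (w ord0 i)%:R *
  \sum_(x : {ffun 'I_N -> bool}) \prod_j Bern (x j) (qq R Rb Bb D (cnt w m.+1) m.+1) * (x k)%:R).
  rewrite mulr_sumr; apply: eq_bigr => x _.
  by rewrite Wt_extend extend_ord0 extend_max -mulnb natrM; ring.
by rewrite bern_x.
Qed.

Lemma Zv_ord N n (z : history N n) (s : 'I_n) i : Zv z s.+1 i = z s i.
Proof. by rewrite /Zv /= valK. Qed.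

Theorem lemma2 (R : realFieldType) (N : nat) (Rb Bb : 'I_N -> nat) (Delta n : nat) :
  (forall k, 0 < Rb k)%N -> (forall k, 0 < Bb k)%N -> (0 < Delta)%N -> (2 <= n)%N ->
  let Tbar : R := (\sum_(k < N) (Rb k + Bb k))%N%:R in
  let rho : R := (\sum_(k < N) Rb k)%N%:R / Tbar in
  let delta : R := (N * Delta)%N%:R / Tbar in
  let P := @npp_prob R N n (@complete_nb N) Rb Bb
             (fun _ _ => Delta) (fun _ _ => Delta) in
  forall i : 'I_N,
    P (fun z => Zv z n i && Zv z 1 i)
      = rho * (rho + (1 + (N%:R - 1) * rho) * (delta / N%:R)) / (1 + delta)
    /\ (forall k : 'I_N, k != i ->
        P (fun z => Zv z n k && Zv z 1 i)
          = rho * (rho + (1 + (N%:R - 1) * rho) * (delta / N%:R)) / (1 + delta)).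
Proof.
move=> HR HB HD; case: n => [|[|m]] // _ Tbar rho delta P i.
have T0 : (0 < \sum_(k < N) (Rb k + Bb k))%N.
  by rewrite (bigD1 i) //= -addnA ltn_addr // HR.
suff gen : forall k : 'I_N, P (fun z => Zv z m.+2 k && Zv z 1 i)
   = rho * (rho + (1 + (N%:R - 1) * rho) * (delta / N%:R)) / (1 + delta).
  by split; [exact: gen | move=> k _; exact: gen].
move=> k; rewrite /P /npp_prob big_mkcond /=.
transitivity (\sum_(z : history N m.+2) Wt R Rb Bb Delta z * (z ord_max k && z ord0 i)%:R).
  apply: eq_bigr => z _.
  have -> : Zv z m.+2 k = z ord_max k := Zv_ord z ord_max k.
  have -> : Zv z 1 i = z ord0 i := Zv_ord z ord0 i.
  by rewrite path_prob_eq; case: (_ && _); rewrite ?mulr1 ?mulr0.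
by rewrite peel Sm_all // Sm_0.
Qed.
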